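(* Let $\mathcal{X}=\mathbb{R}^N$, let $Q\ge 1$ be an integer, and let $h:\mathcal{X}\times\mathcal{X}\to\mathbb{R}_+$ be a (conditionally) negative definite kernel, with $d$ the distance it induces on measures via $d(\eta_1,\eta_2)^2 = -\frac{1}{2}\int_\mathcal{X}\int_\mathcal{X} h(x,y)\,(\eta_1-\eta_2)(dx)\,(\eta_1-\eta_2)(dy)$ for signed measures $\eta_1,\eta_2$ of equal total mass. Let $\eta$ be a signed measure on $\mathcal{X}$ of finite total variation which belongs to the Hilbert space embedding associated with $h$ (i.e., to the reproducing kernel Hilbert space of the kernel $k_{z_0}(x,y)=\frac{h(x,z_0)+h(y,z_0)-h(x,y)}{2}$, $z_0\in\mathcal{X}$ fixed, via the embedding $\mu\mapsto\int k_{z_0}(x,\cdot)\,\mu(dx)$), and such that $\int\eta(dx)>0$. Suppose: 1. $h(\cdot,\cdot)$ is continuous on $\mathcal{X}\times\mathcal{X}$; 2. there exists a positive (definite) kernel $k$ associated to $h$, in the sense that $h(x,y)=k(x,x)+k(y,y)-2k(x,y)$ for all $x,y\in\mathcal{X}$, such that $\lim_{x\to\infty}k(x,x)=\infty$ and, for every $y\in\mathcal{X}$, there exists $b_y<\infty$ with $|k(x,y)|\le b_y$ for all $x\in\mathcal{X}$; 3. there exists a constant $C_L$ such that $k(x,y)\ge C_L$ for all $x,y\in\mathcal{X}$. Then, writing $\delta_{\alpha,X}:=\sum_{q=1}^Q\alpha_q\delta_{x_q}$, the minimization problem $$\inf_{X=(x_q)_{q=1}^Q\in\mathcal{X}^Q,\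 \alpha=(\alpha_q)_{q=1}^Q\in(\mathbb{R}_+)^Q,\ \sum_q\alpha_q=\int\eta(dx)} d\left(\delta_{\alpha,X},\eta\right)^2$$ admits at least one solution $\alpha^\star\in(\mathbb{R}_+)^Q$, $X^\star\in\mathcal{X}^Q$.
   Context: Measures are finite total variation signed measures on $\mathcal{X}=\mathbb{R}^N$; $\delta_x$ denotes the Dirac mass at $x$. The kernel $k$ induces a Hilbert space structure on measures with $\langle\delta_x,\delta_y\rangle=k(x,y)$ and $\|\eta_1-\eta_2\|=d(\eta_1,\eta_2)$. *)

(* Defs.v *)
From HB Require Import structures.
From mathcomp Require Import all_boot all_order all_algebra.
From mathcomp Require Import all_classical all_reals all_analysis.
Set Implicit Arguments. Unset Strict Implicit. Unset Printing Implicit Defensive.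
Import Order.TTheory GRing.Theory Num.Theory.
Import numFieldNormedType.Exports.
Local Open Scope classical_set_scope.
Local Open Scope ring_scope.

Definition BorelRN (R : realType) (N : nat) :=
  g_sigma_algebraType (@open 'rV[R]_N).

Definition pos_def_kernel (T : Type) (R : realType) (k : T -> T -> R) : Prop :=
  (forall x y, k x y = k y x) /\
  forall (n : nat) (c : 'I_n -> R) (x : 'I_n -> T),
    0 <= \sum_(i < n) \sum_(j < n) c i * c j * k (x i) (x j).

Definition cond_neg_def_kernel (T : Type) (R : realType) (h : T -> T -> R) : Prop :=
  (forall x y, h x y = h y x) /\
  forall (n : nat) (c : 'I_n -> R) (x : 'I_n -> T),
    \sum_(i < n) c i = 0 ->
    \sum_(i < n) \sum_(j < n) c i * c j * h (x i) (x j) <= 0.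

Definition kz0 (T : Type) (R : realType) (h : T -> T -> R) (z0 : T) (x y : T) : R :=
  (h x z0 + h y z0 - h x y) / 2.

Section SignedIntegrals.
Context (R : realType) (N : nat).
Local Notation X := (BorelRN R N).

(* A finite signed measure eta is represented by its Jordan decomposition
   eta = Pp - Pn, with Pp, Pn finite (nonnegative) measures that are mutually
   singular.  Then |eta| = Pp + Pn. *)
Definition mutually_singular (Pp Pn : {measure set X -> \bar R}) : Prop :=
  exists A : set X, measurable A /\ Pp (~` A) = 0%E /\ Pn A = 0%E.

Definition sint (Pp Pn : {measure set X -> \bar R}) (f : X -> R) : R :=
  Rintegral Pp setT f - Rintegral Pn setT f.

Definition smass (Pp Pn : {measure set X -> \bar R}) : R :=
  fine (Pp setT) - fine (Pn setT).

Definition sint_diff (Q : nat) (a : 'I_Q -> R) (x : 'I_Q -> X)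
    (Pp Pn : {measure set X -> \bar R}) (f : X -> R) : R :=
  \sum_(q < Q) a q * f (x q) - sint Pp Pn f.

(* Squared distance d(delta_{alpha,X}, eta)^2 = || delta_{alpha,X} - eta ||^2
   in the Hilbert structure on measures induced by the kernel (RKHS of k_{z0}):
   the double integral of k_{z0} against (delta_{alpha,X} - eta)^{(x) 2}. *)
Definition dist2_diff (h : X -> X -> R) (z0 : X) (Q : nat) (a : 'I_Q -> R)
    (x : 'I_Q -> X) (Pp Pn : {measure set X -> \bar R}) : R :=
  sint_diff a x Pp Pn (fun y => sint_diff a x Pp Pn (fun x' => kz0 h z0 x' y)).

(* eta = Pp - Pn belongs to the Hilbert space embedding (RKHS of k_{z0}):
   the kernel mean embedding  int k_{z0}(x,.) eta(dx)  is (Bochner) well defined,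
   i.e.  int sqrt(k_{z0}(x,x)) |eta|(dx) < oo. *)
Definition in_embedding (h : X -> X -> R) (z0 : X)
    (Pp Pn : {measure set X -> \bar R}) : Prop :=
  (\int[Pp]_x (Num.sqrt (kz0 h z0 x x))%:E < +oo)%E /\
  (\int[Pn]_x (Num.sqrt (kz0 h z0 x x))%:E < +oo)%E.

End SignedIntegrals.

(* Main.v *)
Require Import Defs.
From HB Require Import structures.
From mathcomp Require Import all_boot all_order all_algebra.
From mathcomp Require Import all_classical all_reals all_analysis.
From mathcomp Require Import ring lra measurable_realfun.
Set Implicit Arguments. Unset Strict Implicit. Unset Printing Implicit Defensive.
Import Order.TTheory GRing.Theory Num.Theory.
Import numFieldNormedType.Exports.
Local Open Scope classical_set_scope.
Local Open Scope ring_scope.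
Lemma incr_ge (f : nat -> nat) : increasing_seq f -> forall n, (n <= f n)%N.
Proof.
move=> /increasing_seqP fi; elim=> [//|n IH].
by apply: leq_ltn_trans IH _; exact: fi.
Qed.

Lemma incr_cvg (f : nat -> nat) : increasing_seq f -> f n @[n --> \oo] --> \oo.
Proof.
move=> fi A [N _ HA]; exists N => // n /= Nn; apply: HA.
by have := leq_trans Nn (incr_ge fi n).
Qed.

Lemma cvg_subseq {T : topologicalType} (u : nat -> T) (l : T) (f : nat -> nat) :
  increasing_seq f -> u n @[n --> \oo] --> l -> (u \o f) n @[n --> \oo] --> l.
Proof. by move=> fi ul; apply: cvg_comp ul; exact: incr_cvg. Qed.

Lemma cvg_sumR (R : realType) (I : Type) (r : seq I) (u : I -> nat -> R) (l : I -> R) :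
  (forall i, u i n @[n --> \oo] --> l i) ->
  (\sum_(i <- r) u i n) @[n --> \oo] --> \sum_(i <- r) l i.
Proof.
move=> ul; elim: r => [|i r IH].
  rewrite big_nil; under eq_fun do rewrite big_nil; exact: cvg_cst.
rewrite big_cons; under eq_fun do rewrite big_cons.
exact: cvgD.
Qed.

Lemma multi_bw (R : realType) (I : finType) (u : I -> nat -> R) :
  (forall i, exists M, forall n, `|u i n| <= M) ->
  exists2 f : nat -> nat, increasing_seq f & forall i, cvgn (u i \o f).
Proof.
move=> ub.
suff H : forall s : seq I, exists2 f : nat -> nat, increasing_seq f &
    forall i, i \in s -> cvgn (u i \o f).
  by have [f fi Hf] := H (enum I); exists f => // i; apply: Hf; rewrite mem_enum.
elim=> [|i s [f fi Hf]].
  by exists id => //; move=> n m.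
have [M HM] := ub i.
have : bounded_fun (u i \o f).
  exists M; split; first exact: num_real.
  move=> x Mx y _ /=; apply: le_trans (HM (f y)) _; exact: ltW.
move=> /bolzano_weierstrass [g gi Hg].
exists (f \o g).
  apply/increasing_seqP => n /=.
  move/increasing_seqP: fi => fi; move/increasing_seqP: gi => gi.
  have : (g n < g n.+1)%N by exact: gi.
  elim: (g n.+1) => // k IH; rewrite ltnS leq_eqVlt => /orP[/eqP->|/IH]; first exact: fi.
  move=> h; apply: lt_trans h _; exact: fi.
move=> j; rewrite in_cons => /orP[/eqP->|js]; first by [].
have := Hf j js => /cvg_ex [l Hl]; apply/cvg_ex; exists l.
rewrite (_ : u j \o (f \o g) = (u j \o f) \o g) //.
exact: (cvg_subseq gi Hl).
Qed.

Lemma incr_comp (f g : nat -> nat) : increasing_seq f -> increasing_seq g ->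
  increasing_seq (f \o g).
Proof.
move=> fi gi; apply/increasing_seqP => n /=.
move/increasing_seqP: fi => fi; move/increasing_seqP: gi => gi.
have : (g n < g n.+1)%N by exact: gi.
elim: (g n.+1) => // k IH; rewrite ltnS leq_eqVlt => /orP[/eqP->|/IH]; first exact: fi.
move=> h; apply: lt_trans h _; exact: fi.
Qed.
Lemma entry_le_norm (R : realType) (N : nat) (v : 'rV[R]_N) j : `|v ord0 j| <= `|v|.
Proof.
rewrite [leRHS]/Num.Def.normr /= mx_normrE.
exact: (le_bigmax 0 (fun ij : 'I_1 * 'I_N => `|v ij.1 ij.2|) (ord0, j)).
Qed.

Lemma rV_cvg_entry (R : realType) (N : nat) (u : nat -> 'rV[R]_N) (l : 'rV[R]_N) :
  (forall j, u n ord0 j @[n --> \oo] --> l ord0 j) -> u n @[n --> \oo] --> l.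
Proof.
move=> ul; apply/cvgrPdist_lt => e e0.
have : \forall n \near \oo, forall j, `|l ord0 j - u n ord0 j| < e.
  apply: filter_forall => j; exact: (cvgrPdist_lt _ _).1 (ul j) e e0.
apply: filterS => n Hn.
rewrite [X in X < _]/Num.Def.normr /= mx_normrE.
apply: bigmax_lt => // -[i j] _ /=.
by rewrite !mxE (ord1 i); exact: Hn.
Qed.

Lemma seq_cont (R : realType) (N : nat) (f : 'rV[R]_N -> R) (p : 'rV[R]_N) :
  (forall u : nat -> 'rV[R]_N, u n @[n --> \oo] --> p -> f (u n) @[n --> \oo] --> f p) ->
  {for p, continuous f}.
Proof.
move=> Hs; apply: contrapT => nc.
have [e [e0 He]] : exists e : R, 0 < e /\ forall n : nat, exists y,
    `|p - y| < n.+1%:R^-1 /\ e <= `|f p - f y|.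
  apply: contrapT => H; apply: nc; apply/(@cvgrPdist_lt _ _ _ _ (nbhs_filter p)) => e e0.
  apply: contrapT => H2; apply: H; exists e; split => // n.
  apply: contrapT => H3; apply: H2.
  apply/nbhs_ballP; exists n.+1%:R^-1; first by rewrite /= invr_gt0 ltr0n.
  move=> y; rewrite -ball_normE /= => py.
  rewrite ltNge; apply/negP => H4; apply: H3; exists y; split => //.
have [u Hu] := choice He.
have up : u n @[n --> \oo] --> p.
  apply/cvgrPdist_lt => d d0.
  near=> n.
  apply: lt_le_trans (Hu n).1 _.
  rewrite -[leRHS]invrK lef_pV2 ?posrE ?invr_gt0 ?ltr0n //.
  have h : d^-1 <= n%:R by near: n; exact: nbhs_infty_ger.
  apply: le_trans h _; rewrite ler_nat; exact: leqnSn.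
have := (cvgrPdist_lt _ _).1 (Hs u up) e e0 => -[M _ HM].
have := HM M (leqnn M); rewrite ltNge; move/negP; apply.
exact: (Hu M).2.
Unshelve. all: end_near.
Qed.

Lemma cont_meas (R : realType) (N : nat) (f : 'rV[R]_N -> R) :
  continuous f -> measurable_fun setT (f : BorelRN R N -> R).
Proof.
move=> /continuousP cf.
apply: (measurability _ (measurable_realfun.RGenOpens.measurableE R)).
move=> _ [_ [a [b ->]] <-]; apply: measurableI => //.
apply: sub_sigma_algebra; apply: cf; by apply: interval_open.
Qed.
Section kern.
Context (R : realType) (N : nat).
Context (h : 'rV[R]_N -> 'rV[R]_N -> R) (z0 : 'rV[R]_N) (k : 'rV[R]_N -> 'rV[R]_N -> R).
Hypothesis hk : forall x y, h x y = k x x + k y y - 2 * k x y.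
Hypothesis kpd : pos_def_kernel k.

Lemma ksym x y : k x y = k y x.
Proof. by case: kpd => ->. Qed.

Lemma KE x y : kz0 h z0 x y = k x y - k x z0 - k y z0 + k z0 z0.
Proof. rewrite /kz0 !hk. lra. Qed.

Lemma Kform c1 c2 x y :
  0 <= c1 ^+ 2 * kz0 h z0 x x + 2 * c1 * c2 * kz0 h z0 x y + c2 ^+ 2 * kz0 h z0 y y.
Proof.
case: kpd => _ /(_ 3 (fun i => nth 0 [:: c1; c2; -(c1 + c2)] i)
   (fun i => nth z0 [:: x; y; z0] i)).
rewrite !big_ord_recr !big_ord0 /= !add0r.
rewrite !KE (ksym y x) (ksym z0 x) (ksym z0 y).
move=> H; apply: le_trans H _; rewrite le_eqVlt; apply/orP; left; apply/eqP; ring.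
Qed.

Lemma KCS x y :
  `|kz0 h z0 x y| <= Num.sqrt (kz0 h z0 x x) * Num.sqrt (kz0 h z0 y y).
Proof.
have A0 : 0 <= kz0 h z0 x x by have := Kform 1 0 x y; rewrite !expr2; lra.
have C0 : 0 <= kz0 h z0 y y by have := Kform 0 1 x y; rewrite !expr2; lra.
set A := kz0 h z0 x x in A0 *; set B := kz0 h z0 x y; set C := kz0 h z0 y y in C0 *.
have BB : B ^+ 2 <= A * C.
  have [Apos|Ale0] := ltP 0 A.
    have := Kform B (- A) x y; rewrite -/A -/B -/C !expr2 => H; nra.
  have A00 : A = 0 by lra.
  have [Cpos|Cle0] := ltP 0 C.
    have := Kform (- C) B x y; rewrite -/A -/B -/C !expr2 => H; nra.
  have := Kform 1 (- B) x y; rewrite -/A -/B -/C !expr2 => H; nra.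
rewrite -sqrtr_sqr -sqrtrM //; rewrite ler_sqrt //; nra.
Qed.

Lemma Kdiag_ge0 x : 0 <= kz0 h z0 x x.
Proof. by have := Kform 1 0 x x; rewrite !expr2; lra. Qed.

Lemma Ksym x y : kz0 h z0 x y = kz0 h z0 y x.
Proof. rewrite !KE (ksym x y); lra. Qed.


Hypothesis kb : forall y, exists b : R, forall x, `|k x y| <= b.
Hypothesis kL : exists CL : R, forall x y, CL <= k x y.
Hypothesis kcoer : forall M, exists r, forall x, r < `|x| -> M < k x x.
Hypothesis hcont : continuous (fun p : 'rV[R]_N * 'rV[R]_N => h p.1 p.2).

Lemma Klb : exists C : R, C <= 0 /\ forall x y, C <= kz0 h z0 x y.
Proof.
have [b Hb] := kb z0; have [CL HL] := kL.
exists (Num.min 0 (2 * CL - 2 * b)); split; first by rewrite ge_min lexx.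
move=> x y; rewrite KE.
have := Hb x; have := Hb y; have := HL x y; have := HL z0 z0.
rewrite !ler_norml => ? ? /andP[? ?] /andP[? ?].
rewrite ge_min; apply/orP; right; lra.
Qed.

Lemma Kbnd x : exists b : R, forall y, `|kz0 h z0 x y| <= b.
Proof.
have [b Hb] := kb z0; have [bx Hbx] := kb x.
exists (bx + 2 * b + `|k z0 z0|) => y; rewrite KE.
have := Hb x; have := Hb y; have := Hbx y; rewrite (ksym y x).
have H1 := ler_norm (k z0 z0); have H2 := ler_norm (- k z0 z0).
rewrite normrN in H2.
move=> /ler_normlP [? ?] /ler_normlP [? ?] /ler_normlP [? ?].
apply/ler_normlP; split; lra.
Qed.

Lemma Kcoer M : exists r, forall x, kz0 h z0 x x <= M -> `|x| <= r.
Proof.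
have [b Hb] := kb z0; have [r Hr] := kcoer (M + 2 * b + `|k z0 z0|).
exists r => x HK; rewrite leNgt; apply/negP => /Hr H.
rewrite KE in HK; have := Hb x; have H2 := ler_norm (- k z0 z0).
rewrite normrN in H2; move=> /ler_normlP [? ?]; lra.
Qed.

Lemma hseq (u v : nat -> 'rV[R]_N) (a b : 'rV[R]_N) :
  u n @[n --> \oo] --> a -> v n @[n --> \oo] --> b ->
  h (u n) (v n) @[n --> \oo] --> h a b.
Proof.
move=> ua vb; have H := @hcont (a, b).
exact: (@cvg_comp2 _ _ _ _ (nbhs \oo) (nbhs a) (nbhs b) (nbhs (h a b)) _ _ _ u v h ua vb H).
Qed.

Lemma Kseq (u v : nat -> 'rV[R]_N) (a b : 'rV[R]_N) :
  u n @[n --> \oo] --> a -> v n @[n --> \oo] --> b ->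
  kz0 h z0 (u n) (v n) @[n --> \oo] --> kz0 h z0 a b.
Proof.
move=> ua vb; rewrite /kz0; apply: cvgM; last exact: cvg_cst.
apply: cvgB; last exact: hseq.
by apply: cvgD; apply: hseq => //; exact: cvg_cst.
Qed.

Lemma Kcont2 x : continuous (fun y => kz0 h z0 x y).
Proof. move=> y; apply: seq_cont => u uy; apply: Kseq => //; exact: cvg_cst. Qed.

Lemma Kcont1 y : continuous (fun x => kz0 h z0 x y).
Proof. move=> x; apply: seq_cont => u ux; apply: Kseq => //; exact: cvg_cst. Qed.

Lemma Ksqrt_cont : continuous (fun y => Num.sqrt (kz0 h z0 y y)).
Proof.
move=> y; apply: seq_cont => u uy.
apply: (cvg_comp _ _ (Kseq uy uy)); exact: sqrt_continuous.
Qed.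
End kern.
Section meas.
Context (R : realType) (N : nat) (mu : {finite_measure set BorelRN R N -> \bar R}).

Lemma dct_R (f : nat -> 'rV[R]_N -> R) (f0 s : 'rV[R]_N -> R) :
  (forall n, measurable_fun setT (f n : BorelRN R N -> R)) ->
  measurable_fun setT (f0 : BorelRN R N -> R) ->
  (forall x, f n x @[n --> \oo] --> f0 x) ->
  mu.-integrable setT (EFin \o (s : BorelRN R N -> R)) ->
  (forall n x, `|f n x| <= s x) -> (forall x, `|f0 x| <= s x) ->
  Rintegral mu setT (f n : BorelRN R N -> R) @[n --> \oo] -->
  Rintegral mu setT (f0 : BorelRN R N -> R).
Proof.
move=> mf mf0 ff0 si fs f0s.
have if0 : mu.-integrable setT (EFin \o (f0 : BorelRN R N -> R)).
  apply: (le_integrable measurableT _ _ si).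
    by apply/measurable_EFinP.
  move=> x _ /=.
rewrite lee_fin; apply: le_trans (f0s x) _.
  exact: ler_norm.
have H := @dominated_cvg _ _ _ mu setT measurableT (fun n x => (f n x)%:E)
  (EFin \o f0) (EFin \o s).
have := H _ _ _ si; rewrite /Rintegral.
rewrite -(fineK (integrable_fin_num measurableT if0)).
move=> H2; apply: (fine_cvg (f := fun n => (\int[mu]_(x in setT) (f n x)%:E)%E)).
apply: H2.
- by move=> n; apply/measurable_EFinP.
- by move=> x _; apply: cvg_EFin; [exact: nearW | exact: ff0].
- by move=> x _.
- by move=> n x _ /=; rewrite lee_fin.
Qed.

Context (Kf : 'rV[R]_N -> 'rV[R]_N -> R).
Hypothesis Kc1 : forall y, continuous (fun x => Kf x y).
Hypothesis Kc2 : forall x, continuous (fun y => Kf x y).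
Hypothesis Kseq' : forall (u v : nat -> 'rV[R]_N) (a b : 'rV[R]_N),
  u n @[n --> \oo] --> a -> v n @[n --> \oo] --> b ->
  Kf (u n) (v n) @[n --> \oo] --> Kf a b.
Hypothesis KCS' : forall x y, `|Kf x y| <= Num.sqrt (Kf x x) * Num.sqrt (Kf y y).
Hypothesis Kbnd' : forall x, exists b : R, forall y, `|Kf x y| <= b.
Hypothesis Ksqc : continuous (fun y => Num.sqrt (Kf y y)).
Hypothesis sqi : mu.-integrable setT (EFin \o (fun x : BorelRN R N => Num.sqrt (Kf x x))).

Local Notation sq x := (Num.sqrt (Kf x x)).

Lemma int_bound (f : 'rV[R]_N -> R) (c : R) : continuous f ->
  (forall x, `|f x| <= c * sq x) ->
  mu.-integrable setT (EFin \o (f : BorelRN R N -> R)).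
Proof.
move=> cf fb.
apply: (le_integrable measurableT _ _ (integrableZl measurableT c sqi)).
  by apply/measurable_EFinP; exact: cont_meas.
move=> x _ /=; rewrite lee_fin; apply: le_trans (fb x) _.
exact: ler_norm.
Qed.

Lemma int_K y : mu.-integrable setT (EFin \o (fun x : BorelRN R N => Kf x y)).
Proof.
apply: (int_bound (c := sq y)) => // x; rewrite mulrC; exact: KCS'.
Qed.

Lemma int_K2 x : mu.-integrable setT (EFin \o (fun y : BorelRN R N => Kf x y)).
Proof. apply: (int_bound (c := sq x)) => // y; exact: KCS'. Qed.

Definition gm y := Rintegral mu setT (fun x : BorelRN R N => Kf x y).
Definition Sm := Rintegral mu setT (fun x : BorelRN R N => sq x).

Lemma Sm_ge0 : 0 <= Sm.
Proof. by apply: Rintegral_ge0 => x _; exact: sqrtr_ge0. Qed.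

Lemma gm_bound y : `|gm y| <= Sm * sq y.
Proof.
rewrite /gm; apply: le_trans (le_normr_Rintegral measurableT (int_K y)) _.
rewrite /Sm -RintegralZr //.
apply: le_Rintegral => //.
- exact: integrable_norm (int_K y).
- apply: (int_bound (f := fun x : 'rV[R]_N => sq x * sq y) (c := sq y)).
    move=> x; apply: (cvgM (FF := nbhs_filter x)); last exact: cvg_cst.
    exact: (@Ksqc x).
  move=> x; rewrite normrM (ger0_norm (sqrtr_ge0 _)) (ger0_norm (sqrtr_ge0 _)) mulrC; exact: lexx.
Qed.

Lemma gm_seq (u : nat -> 'rV[R]_N) (y : 'rV[R]_N) : u n @[n --> \oo] --> y ->
  gm (u n) @[n --> \oo] --> gm y.
Proof.
move=> uy.
have sc : sq (u n) @[n --> \oo] --> sq y := cvg_comp _ _ uy (@Ksqc y).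
case: (cvg_bounded _ _ sc) => M0 [_ HM].
have [N0 _ HN] := HM (`|M0| + 1) (ltr_pwDr ltr01 (ler_norm M0)).
set M := `|M0| + 1 + sq y.
have uy' : u (n + N0) @[n --> \oo] --> y by rewrite (cvg_shiftn N0 u).
rewrite -(cvg_shiftn N0).
have bM n : sq (u (n + N0)) <= M.
  have := HN (n + N0)%N (leq_addl _ _); rewrite /= ger0_norm ?sqrtr_ge0 // => H.
  rewrite /M; have := sqrtr_ge0 (Kf y y); lra.
have M0' : sq y <= M by rewrite /M; have := normr_ge0 M0; lra.
apply: (dct_R (f := fun n x => Kf x (u (n + N0))) (s := fun x => sq x * M)).
- by move=> n; apply: cont_meas; exact: Kc1.
- by apply: cont_meas; exact: Kc1.
- by move=> x; exact: (cvg_comp _ _ uy' (@Kc2 x y)).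
- apply: (int_bound (c := M)).
    by move=> x; apply: (cvgM (FF := nbhs_filter x)); [exact: (@Ksqc x) | exact: cvg_cst].
  move=> x; rewrite mulrC ger0_norm //; apply: mulr_ge0; last exact: sqrtr_ge0.
  by apply: le_trans (bM 0%N); exact: sqrtr_ge0.
- move=> n x; apply: le_trans (KCS' _ _) _.
  by apply: ler_wpM2l; [exact: sqrtr_ge0 | exact: bM].
- move=> x; apply: le_trans (KCS' _ _) _.
  by apply: ler_wpM2l; [exact: sqrtr_ge0 | exact: M0'].
Qed.

Lemma gm_cont : continuous gm.
Proof. by move=> y; apply: seq_cont => u uy; exact: gm_seq. Qed.

Lemma int_gm : mu.-integrable setT (EFin \o (gm : BorelRN R N -> R)).
Proof.
apply: (int_bound (c := Sm)); first exact: gm_cont.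
exact: gm_bound.
Qed.

Lemma gm_small (t : nat -> R) (u : nat -> 'rV[R]_N) (T : R) :
  t n @[n --> \oo] --> 0 -> (forall n, 0 <= t n) ->
  (forall n, t n * sq (u n) <= T) ->
  t n * gm (u n) @[n --> \oo] --> 0.
Proof.
move=> t0 tge0 tT.
have T0 : 0 <= T by apply: le_trans (tT 0%N); apply: mulr_ge0 => //; exact: sqrtr_ge0.
have -> : (fun n => t n * gm (u n)) =
    (fun n => Rintegral mu setT (fun x : BorelRN R N => t n * Kf x (u n))).
  by apply: funext => n; rewrite /gm RintegralZl //; exact: int_K.
have -> : (0 : R) = Rintegral mu setT (fun x : BorelRN R N => 0).
  by rewrite Rintegral_cst // mul0r.
apply: (dct_R (f := fun n x => t n * Kf x (u n)) (s := fun x => sq x * T)).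
- move=> n; apply: cont_meas => x; apply: (cvgM (FF := nbhs_filter x)).
    exact: cvg_cst.
  exact: (@Kc1 (u n) x).
- exact: measurable_cst.
- move=> x; have [b Hb] := Kbnd' x.
  apply: (@squeeze_cvgr _ _ _ _ (fun n => - (t n * b)) (fun n => t n * b)).
  + apply: nearW => n; have := Hb (u n) => /ler_normlP [H1 H2].
    have := tge0 n => H0; apply/andP; split; nra.
  + rewrite -oppr0; apply: cvgN; rewrite -(mul0r b); apply: cvgM => //; exact: cvg_cst.
  + rewrite -(mul0r b); apply: cvgM => //; exact: cvg_cst.
- apply: (int_bound (c := T)).
    by move=> x; apply: (cvgM (FF := nbhs_filter x)); [exact: (@Ksqc x) | exact: cvg_cst].
  move=> x; rewrite mulrC ger0_norm //; apply: mulr_ge0 => //; exact: sqrtr_ge0.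
- move=> n x; rewrite normrM ger0_norm //.
  apply: le_trans (ler_wpM2l (tge0 n) (KCS' _ _)) _.
  rewrite mulrCA; apply: ler_wpM2l; first exact: sqrtr_ge0.
  exact: tT.
- by move=> x; rewrite normr0; apply: mulr_ge0 => //; exact: sqrtr_ge0.
Qed.
End meas.
Lemma Rint_sum (R : realType) (N : nat) (mu : {finite_measure set BorelRN R N -> \bar R})
  (I : Type) (r : seq I) (F : I -> BorelRN R N -> R) :
  (forall i, mu.-integrable setT (EFin \o F i)) ->
  mu.-integrable setT (EFin \o (fun y => \sum_(i <- r) F i y)) /\
  Rintegral mu setT (fun y => \sum_(i <- r) F i y) = \sum_(i <- r) Rintegral mu setT (F i).
Proof.
move=> iF; elim: r => [|i r [IH1 IH2]].
  rewrite big_nil; under eq_fun do rewrite big_nil.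
  split; last by rewrite Rintegral_cst // mul0r.
  exact: integrable0.
rewrite big_cons; under eq_fun do rewrite big_cons.
split; last by rewrite RintegralD // IH2.
have := integrableD measurableT (iF i) IH1.
apply: eq_integrable => // y _ /=; by rewrite EFinD.
Qed.

Lemma dist2_formula (R : realType) (N Q : nat) (h : BorelRN R N -> BorelRN R N -> R)
  (z0 : BorelRN R N) (a : 'I_Q -> R) (x : 'I_Q -> BorelRN R N)
  (Pp Pn : {finite_measure set BorelRN R N -> \bar R}) :
  (forall x y, kz0 h z0 x y = kz0 h z0 y x) ->
  (forall y, Pp.-integrable setT (EFin \o (fun x => kz0 h z0 x y))) ->
  (forall y, Pn.-integrable setT (EFin \o (fun x => kz0 h z0 x y))) ->
  Pp.-integrable setT (EFin \o (fun y => sint Pp Pn (fun x' => kz0 h z0 x' y))) ->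
  Pn.-integrable setT (EFin \o (fun y => sint Pp Pn (fun x' => kz0 h z0 x' y))) ->
  dist2_diff h z0 a x Pp Pn =
    \sum_q \sum_p a q * a p * kz0 h z0 (x p) (x q)
    - 2 * \sum_q a q * sint Pp Pn (fun x' => kz0 h z0 x' (x q))
    + sint Pp Pn (fun y => sint Pp Pn (fun x' => kz0 h z0 x' y)).
Proof.
move=> Ks iKp iKn igp ign.
set K := kz0 h z0 in Ks iKp iKn igp ign *.
set g := (fun y => sint Pp Pn (fun x' => K x' y)) in igp ign *.
have lin : forall mu : {finite_measure set BorelRN R N -> \bar R},
    (forall y, mu.-integrable setT (EFin \o (fun x => K x y))) ->
    mu.-integrable setT (EFin \o g) ->
    Rintegral mu setT (fun y => \sum_p a p * K (x p) y - g y) =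
    \sum_p a p * Rintegral mu setT (fun x' => K x' (x p)) - Rintegral mu setT g.
  move=> mu iK ig.
  have iF : forall p, mu.-integrable setT (EFin \o (fun y => a p * K (x p) y)).
    move=> p; have := integrableZl measurableT (a p) (iK (x p)).
    apply: eq_integrable => // y _ /=; by rewrite Ks.
  have [i1 i2] := Rint_sum (index_enum 'I_Q) iF.
  rewrite RintegralB // i2; congr (_ - _); apply: eq_bigr => p _.
  rewrite RintegralZl //; last first.
    have := iK (x p); apply: eq_integrable => // y _ /=; by rewrite Ks.
  congr (_ * _); apply: eq_Rintegral => y _; exact: Ks.
rewrite /dist2_diff /sint_diff.
rewrite [sint Pp Pn (fun y => _)]/sint lin // lin //.
have e1 : \sum_q a q * (\sum_p a p * K (x p) (x q) - g (x q)) =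
    \sum_q \sum_p a q * a p * K (x p) (x q) - \sum_q a q * g (x q).
  rewrite -sumrB; apply: eq_bigr => q _; rewrite mulrBr mulr_sumr; congr (_ - _).
  by apply: eq_bigr => p _; rewrite mulrA.
have e2 : \sum_p a p * Rintegral Pp setT (fun x' => K x' (x p)) -
    \sum_p a p * Rintegral Pn setT (fun x' => K x' (x p)) = \sum_q a q * g (x q).
  by rewrite -sumrB; apply: eq_bigr => p _; rewrite -mulrBr.
rewrite e1 /sint; rewrite /sint in e2; lra.
Qed.
Theorem proposition2 (R : realType) (N Q : nat) (hQ : (1 <= Q)%N)
    (h : BorelRN R N -> BorelRN R N -> R)
    (Pp Pn : {finite_measure set BorelRN R N -> \bar R}) (z0 : BorelRN R N) :
  (forall x y, 0 <= h x y) ->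
  cond_neg_def_kernel h ->
  mutually_singular Pp Pn ->
  in_embedding h z0 Pp Pn ->
  0 < smass Pp Pn ->
  (* 1. h is continuous on X x X *)
  continuous (fun p : 'rV[R]_N * 'rV[R]_N => h p.1 p.2) ->
  (* 2. an associated positive definite kernel k *)
  (exists k : 'rV[R]_N -> 'rV[R]_N -> R,
     [/\ pos_def_kernel k,
         (forall x y, h x y = k x x + k y y - 2 * k x y),
         (forall M : R, exists r : R, forall x, r < `|x| -> M < k x x),
         (forall y, exists b : R, forall x, `|k x y| <= b) &
     (* 3. k is bounded from below *)
         (exists CL : R, forall x y, CL <= k x y)]) ->
  exists (a : 'I_Q -> R) (x : 'I_Q -> BorelRN R N),
    [/\ (forall q, 0 <= a q), \sum_(q < Q) a q = smass Pp Pn &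
        forall (b : 'I_Q -> R) (y : 'I_Q -> BorelRN R N),
          (forall q, 0 <= b q) -> \sum_(q < Q) b q = smass Pp Pn ->
          dist2_diff h z0 a x Pp Pn <= dist2_diff h z0 b y Pp Pn].
Proof.
move=> hge0 _ _ [embp embn] mpos hcont [k [kpd hk kcoer kb kL]].
pose K := kz0 h z0.
have Ksy : forall x y, K x y = K y x := Ksym z0 hk kpd.
have KCS' : forall x y, `|K x y| <= Num.sqrt (K x x) * Num.sqrt (K y y) := KCS z0 hk kpd.
have Kd0 : forall x, 0 <= K x x := Kdiag_ge0 z0 hk kpd.
have [C [C0 HC]] := Klb z0 hk kb kL.
have Kb : forall x, exists b : R, forall y, `|K x y| <= b := Kbnd z0 hk kpd kb.
have Kco := Kcoer z0 hk kb kcoer.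
have Kc1 : forall y, continuous (fun x => K x y) := @Kcont1 _ _ h z0 hcont.
have Kc2 : forall x, continuous (fun y => K x y) := @Kcont2 _ _ h z0 hcont.
have Ksqc : continuous (fun y : 'rV[R]_N => Num.sqrt (K y y)) := @Ksqrt_cont _ _ h z0 hcont.
have sqi : forall mu : {finite_measure set BorelRN R N -> \bar R},
    (\int[mu]_x (Num.sqrt (kz0 h z0 x x))%:E < +oo)%E ->
    mu.-integrable setT (EFin \o (fun x : BorelRN R N => Num.sqrt (K x x))).
  move=> mu emb; apply/integrableP; split.
    by apply/measurable_EFinP; exact: cont_meas.
  under eq_integral => x _ do rewrite abse_EFin (ger0_norm (sqrtr_ge0 _)).
  exact: emb.
have sqp := sqi Pp embp; have sqn := sqi Pn embn.
pose sq x := Num.sqrt (K x x).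
have sq0 : forall x, 0 <= sq x by move=> x; exact: sqrtr_ge0.
pose g y := gm Pp K y - gm Pn K y.
pose G0 := Sm Pp K + Sm Pn K.
have G00 : 0 <= G0 by apply: addr_ge0; exact: Sm_ge0.
have gb : forall y, `|g y| <= G0 * sq y.
  move=> y; have := gm_bound Kc1 KCS' Ksqc sqp y; have := gm_bound Kc1 KCS' Ksqc sqn y.
  rewrite /g /G0 /sq => H1 H2; apply: le_trans (ler_normB _ _) _; lra.
have gc : continuous g.
  move=> y; apply: (cvgB (FF := nbhs_filter y)); [exact: (gm_cont Kc1 Kc2 KCS' Ksqc sqp) | exact: (gm_cont Kc1 Kc2 KCS' Ksqc sqn)].
have gi : forall mu : {finite_measure set BorelRN R N -> \bar R},
    mu.-integrable setT (EFin \o (fun x : BorelRN R N => Num.sqrt (K x x))) ->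
    mu.-integrable setT (EFin \o (g : BorelRN R N -> R)).
  by move=> mu smu; apply: (int_bound smu (c := G0)).
pose c0 := sint Pp Pn g.
pose F (a : 'I_Q -> R) (x : 'I_Q -> 'rV[R]_N) :=
  \sum_q \sum_p a q * a p * K (x p) (x q) - 2 * \sum_q a q * g (x q) + c0.
have Fd : forall a x, dist2_diff h z0 a x Pp Pn = F a x.
  move=> a x; rewrite (dist2_formula a x Ksy) //.
  - by move=> y; exact: (int_K Kc1 KCS' sqp).
  - by move=> y; exact: (int_K Kc1 KCS' sqn).
  - exact: gi.
  - exact: gi.
pose m := smass Pp Pn.
pose L0 := C * m ^+ 2 + c0 - Q%:R * G0 ^+ 2.
have LB : forall (a : 'I_Q -> R) (x : 'I_Q -> 'rV[R]_N), (forall q, 0 <= a q) ->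
    \sum_q a q = m -> forall q0, (a q0 * sq (x q0) - G0) ^+ 2 <= F a x - L0.
  move=> a x a0 am q0.
  pose t q := a q * sq (x q).
  have S1 : \sum_q t q ^+ 2 + C * m ^+ 2 <= \sum_q \sum_p a q * a p * K (x p) (x q).
    have E1 : \sum_q \sum_p a q * a p * C = C * m ^+ 2.
      rewrite -am expr2 mulr_suml mulr_sumr; apply: eq_bigr => q _.
      by rewrite mulr_sumr mulr_sumr; apply: eq_bigr => p _; ring.
    have E2 : \sum_q \sum_p (if p == q then t q ^+ 2 else 0) = \sum_q t q ^+ 2.
      by apply: eq_bigr => q _; rewrite -big_mkcond big_pred1_eq.
    rewrite -E1 -E2 -big_split; apply: ler_sum => q _; rewrite -big_split.
    apply: ler_sum => p _ /=.
    case: eqP => [->|_].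
      rewrite /t exprMn sqr_sqrtr // -expr2.
      have H2 : 0 <= a q ^+ 2 by exact: sqr_ge0.
      rewrite -[X in _ <= X]addr0; apply: lerD => //.
      by rewrite mulrC mulr_le0_ge0.
    rewrite add0r; apply: ler_wpM2l; first by apply: mulr_ge0.
    exact: HC.
  have S2 : \sum_q a q * g (x q) <= G0 * \sum_q t q.
    rewrite mulr_sumr; apply: ler_sum => q _.
    rewrite /t mulrCA; apply: ler_wpM2l => //.
    apply: le_trans (ler_norm _) _; exact: gb.
  have S3 : (t q0 - G0) ^+ 2 - Q%:R * G0 ^+ 2 <= \sum_q t q ^+ 2 - 2 * (G0 * \sum_q t q).
    have -> : \sum_q t q ^+ 2 - 2 * (G0 * \sum_q t q) =
        \sum_q (t q - G0) ^+ 2 - \sum_(q < Q) G0 ^+ 2.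
      rewrite -!sumrB mulr_sumr mulr_sumr -sumrB; apply: eq_bigr => q _.
      rewrite sqrrB; ring.
    rewrite sumr_const card_ord; apply: lerB; last by rewrite mulr_natl.
    rewrite (bigD1 q0) //= lerDl; apply: sumr_ge0 => q _; exact: sqr_ge0.
  move: S1 S2 S3; rewrite /F /L0 /t /=; lra.

have Fge : forall (a : 'I_Q -> R) (x : 'I_Q -> 'rV[R]_N), (forall q, 0 <= a q) ->
    \sum_q a q = m -> L0 <= F a x.
  move=> a x a0 am; have := LB a x a0 am (Ordinal hQ).
  have := sqr_ge0 (a (Ordinal hQ) * sq (x (Ordinal hQ)) - G0); lra.
pose S := [set r : R | exists (a : 'I_Q -> R) (x : 'I_Q -> 'rV[R]_N),
  [/\ (forall q, 0 <= a q), \sum_q a q = m & r = F a x]].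
have S0 : S !=set0.
  pose q0 : 'I_Q := Ordinal hQ.
  exists (F (fun q => if q == q0 then m else 0) (fun=> 0)).
  exists (fun q => if q == q0 then m else 0), (fun=> 0); split => //.
    by move=> q; case: eqP => _ //; exact: ltW.
  by rewrite (bigD1 q0) //= ?eqxx big1 ?addr0 // => q /negbTE ->.
have Slb : has_lbound S.
  by exists L0 => r [a [x [a0 am ->]]]; exact: Fge.
have hinf : has_inf S by split.
pose I := inf S.
have IleF : forall (a : 'I_Q -> R) (x : 'I_Q -> 'rV[R]_N), (forall q, 0 <= a q) ->
    \sum_q a q = m -> I <= F a x.
  by move=> a x a0 am; apply: ge_inf => //; exists a, x.
have Hmin : forall n : nat, exists p : ('I_Q -> R) * ('I_Q -> 'rV[R]_N),
    [/\ (forall q, 0 <= p.1 q), \sum_q p.1 q = m & F p.1 p.2 < I + n.+1%:R^-1].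
  move=> n; have ep : 0 < n.+1%:R^-1 :> R by rewrite invr_gt0 ltr0n.
  have [e [a [x [a0 am ->]]] He] := inf_adherent ep hinf.
  by exists (a, x).
have [ps Hps] := choice Hmin.
pose A n := (ps n).1; pose Xs n := (ps n).2.
have A0 : forall n q, 0 <= A n q by move=> n q; case: (Hps n) => H _ _; exact: H.
have Am : forall n, \sum_q A n q = m by move=> n; case: (Hps n).
have AF : forall n, F (A n) (Xs n) < I + n.+1%:R^-1 by move=> n; case: (Hps n).
pose B0 := I + 1 - L0.
pose T := G0 + 1 + B0.
have AT : forall n q, A n q * sq (Xs n q) <= T.
  move=> n q; have H4 := LB (A n) (Xs n) (A0 n) (Am n) q.
  have H3 := AF n; have H2 : n.+1%:R^-1 <= 1 :> R by rewrite invf_le1 // ?ler1n // ltr0n.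
  set u := A n q * sq (Xs n q) - G0 in H4.
  have hu : u ^+ 2 < B0.
    rewrite /B0; move: H2 H3 H4; rewrite /F /=.
    generalize (n.+1%:R^-1 : R) => e; lra.
  have hv := sqr_ge0 (u - 1).
  have hw := sqr_ge0 u.
  rewrite !expr2 in hu hv hw.
  have : u <= 1 + B0 by nra.
  rewrite /u /T; lra.
have Ab : forall n q, A n q <= m.
  move=> n q; rewrite -(Am n) (bigD1 q) //= lerDl; apply: sumr_ge0 => p _; exact: A0.
have Abd : forall q, exists M : R, forall n, `|A n q| <= M.
  by move=> q; exists m => n; rewrite ger0_norm //; exact: Ab.
have [phi1 phi1i Hc1] := @multi_bw R _ (fun q n => A n q) Abd.
pose astar q := lim (A (phi1 n) q @[n --> \oo]).
have acv : forall q, A (phi1 n) q @[n --> \oo] --> astar q by move=> q; exact: Hc1.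
have as0 : forall q, 0 <= astar q.
  by move=> q; apply: limr_ge; [exact: Hc1 | apply: nearW => n; exact: A0].
have asm : \sum_q astar q = m.
  have := @cvg_sumR R _ (index_enum 'I_Q) _ _ acv.
  have -> : (fun n => \sum_(q <- index_enum 'I_Q) A (phi1 n) q) = fun=> m.
    by apply: funext => n; exact: Am.
  move/(cvg_lim (@Rhausdorff R)); rewrite lim_cst //; exact: Rhausdorff.
pose P q := 0 < astar q.
pose Y n q : 'rV[R]_N := if (astar q / 2 <= A (phi1 n) q) && P q then Xs (phi1 n) q else 0.
have Ybd : forall q, exists M : R, forall n, `|Y n q| <= M.
  move=> q; case Pq : (P q); last first.
    by exists 0 => n; rewrite /Y Pq andbF normr0.
  have [r Hr] := Kco ((2 * T / astar q) ^+ 2).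
  exists `|r| => n; rewrite /Y Pq andbT; case: ifP => Hq; last by rewrite normr0.
  apply: le_trans (ler_norm r); apply: Hr.
  have sqle : sq (Xs (phi1 n) q) <= 2 * T / astar q.
    rewrite ler_pdivlMr //; have := AT (phi1 n) q; have := sq0 (Xs (phi1 n) q).
    move: Hq Pq; rewrite /P => Hq Pq; nra.
  have := sqr_sqrtr (Kd0 (Xs (phi1 n) q)); rewrite /K => <-.
  have := sq0 (Xs (phi1 n) q); rewrite /sq in sqle * => s0.
  by rewrite ler_sqr // ?nnegrE //; apply: le_trans sqle.
have Ybd2 : forall qj : 'I_Q * 'I_N, exists M : R, forall n, `|Y n qj.1 ord0 qj.2| <= M.
  move=> [q j]; have [M HM] := Ybd q; exists M => n /=.
  exact: le_trans (entry_le_norm _ _) (HM n).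
have [phi2 phi2i Hc2] := @multi_bw R _ (fun qj n => Y n qj.1 ord0 qj.2) Ybd2.
pose xs q : 'rV[R]_N := \row_j lim (Y (phi2 n) q ord0 j @[n --> \oo]).
have Ycv : forall q, Y (phi2 n) q @[n --> \oo] --> xs q.
  move=> q; apply: rV_cvg_entry => j; rewrite mxE; exact: (Hc2 (q, j)).
pose psi := phi1 \o phi2.
have psii : increasing_seq psi by exact: incr_comp.
have acv' : forall q, A (psi n) q @[n --> \oo] --> astar q.
  move=> q; exact: (cvg_subseq phi2i (acv q)).
have Xcv : forall q, P q -> Xs (psi n) q @[n --> \oo] --> xs q.
  move=> q Pq; apply: cvg_trans (Ycv q).
  apply: near_eq_cvg; near=> n.
  rewrite /Y /psi /= Pq andbT ifT //; apply: ltW.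
  near: n; apply: (cvgr_gt (astar q) (acv' q)).
  by rewrite /P in Pq; rewrite ltr_pdivrMr // ltr_pMr // ltr1n.
have a0 : forall q, ~~ P q -> astar q = 0.
  move=> q; rewrite /P -leNgt => H; apply/eqP; rewrite eq_le H; exact: as0.
pose Hn n := \sum_q \sum_p (if P q && P p
    then A (psi n) q * A (psi n) p * K (Xs (psi n) p) (Xs (psi n) q)
    else A (psi n) q * A (psi n) p * C)
  - 2 * \sum_q A (psi n) q * g (Xs (psi n) q) + c0.
pose Hs := \sum_q \sum_p (if P q && P p
    then astar q * astar p * K (xs p) (xs q)
    else astar q * astar p * C)
  - 2 * \sum_q astar q * g (xs q) + c0.
have HleF : forall n, Hn n <= F (A (psi n)) (Xs (psi n)).
  move=> n; rewrite /Hn /F lerD2r lerD2r.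
  apply: ler_sum => q _; apply: ler_sum => p _.
  case: ifP => _ //; apply: ler_wpM2l; first by apply: mulr_ge0.
  exact: HC.
have Hle : forall n, Hn n <= I + n.+1%:R^-1.
  move=> n; apply: le_trans (HleF n) _; apply: ltW; apply: lt_le_trans (AF (psi n)) _.
  rewrite lerD2l lef_pV2 ?posrE ?ltr0n // ler_nat ltnS; exact: incr_ge psii n.
have gseq : forall (u : nat -> 'rV[R]_N) y, u n @[n --> \oo] --> y ->
    g (u n) @[n --> \oo] --> g y.
  move=> u y uy; apply: cvgB.
    exact: (gm_seq Kc1 Kc2 KCS' Ksqc sqp uy).
  exact: (gm_seq Kc1 Kc2 KCS' Ksqc sqn uy).
have Hcv : Hn n @[n --> \oo] --> Hs.
  apply: cvgD; last exact: cvg_cst.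
  apply: cvgB.
    apply: cvg_sumR => q; apply: cvg_sumR => p.
    case: ifP => Hqp.
      move/andP: Hqp => [Pq1 Pp1].
      apply: cvgM; first by apply: cvgM; exact: acv'.
      exact: (Kseq hcont (Xcv p Pp1) (Xcv q Pq1)).
    apply: cvgM; last exact: cvg_cst.
    by apply: cvgM; exact: acv'.
  apply: cvgM; first exact: cvg_cst.
  apply: cvg_sumR => q.
  case Pq : (P q).
    apply: cvgM; first exact: acv'.
    exact: gseq (Xcv q Pq).
  have a0q : astar q = 0 by apply: a0; rewrite Pq.
  rewrite a0q mul0r.
  have t0 : A (psi n) q @[n --> \oo] --> 0 by rewrite -a0q; exact: acv'.
  have -> : (fun n => A (psi n) q * g (Xs (psi n) q)) =
      (fun n => A (psi n) q * gm Pp K (Xs (psi n) q) - A (psi n) q * gm Pn K (Xs (psi n) q)).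
    by apply: funext => n; rewrite /g mulrBr.
  rewrite -[0](subr0 0); apply: cvgB.
    exact: (gm_small Kc1 KCS' Kb Ksqc sqp t0 (fun n => A0 _ q) (fun n => AT _ q)).
  exact: (gm_small Kc1 KCS' Kb Ksqc sqn t0 (fun n => A0 _ q) (fun n => AT _ q)).
have HsF : Hs = F astar xs.
  rewrite /Hs /F; congr (_ - _ + _); apply: eq_bigr => q _; apply: eq_bigr => p _.
  case: ifP => // /negbT; rewrite negb_and => /orP[] nP.
    by rewrite (a0 q nP) !mul0r.
  by rewrite (a0 p nP) !mulr0 !mul0r.
have FI : F astar xs <= I.
  rewrite -HsF; apply/ler_addgt0Pr => e e0.
  rewrite -(cvg_lim (@Rhausdorff R) Hcv).
  apply: limr_le; first by apply/cvg_ex; exists Hs.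
  near=> n; apply: le_trans (Hle n) _; rewrite lerD2l.
  rewrite -[leRHS]invrK lef_pV2 ?posrE ?invr_gt0 ?ltr0n //.
  have hh : e^-1 <= n%:R by near: n; exact: nbhs_infty_ger.
  apply: le_trans hh _; rewrite ler_nat; exact: leqnSn.
exists astar, xs; split => // b y b0 bm.
rewrite !Fd; apply: le_trans FI _; exact: IleF.
Unshelve. all: end_near.
Qed.
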